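(* Let ${\rm K}/\mathbb{Q}$ be a finite Galois extension of degree $m$ and let $u\in E_{\rm K}\cap\mathbb{S}$. Then there exist an integer $k\ge1$ and a constant $c>0$ (depending on $u$, $k$ and $m$) such that $|{\rm N}(\Phi_n(u^k))|\ge \exp(cn)$ for every positive integer $n$ with $\varphi(n)\ge \frac12 n$.
   Context: $E_{\rm K}$ is the unit group of $\mathcal{O}_{\rm K}$; ${\rm N}$ is the norm from ${\rm K}$ to $\mathbb{Q}$; $\Phi_n$ is the $n$-th cyclotomic polynomial and $\varphi$ Euler's totient function. $\mathbb{S}$ is the set of algebraic integers none of whose conjugates lies on the complex unit circle. *)

(* Defs.v *)
From HB Require Import structures.
From mathcomp Require Import all_boot all_order all_algebra all_field.
From mathcomp Require Import Rstruct.
From Stdlib Require Import Reals.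
Set Implicit Arguments. Unset Strict Implicit. Unset Printing Implicit Defensive.
Import GRing.Theory Num.Theory.
Local Open Scope ring_scope.

Definition is_alg_int (L : fieldExtType rat) (x : L) : Prop :=
  exists p : {poly int}, p \is monic /\ root (map_poly (fun z : int => z%:~R : L) p) x.

Definition is_unit_OK (L : fieldExtType rat) (x : L) : Prop :=
  x != 0 /\ is_alg_int x /\ is_alg_int x^-1.

(* x is in S: an algebraic integer none of whose conjugates (images under
   the embeddings K -> C, here into the algebraic complex numbers algC)
   lies on the unit circle *)
Definition in_S (L : fieldExtType rat) (x : L) : Prop :=
  is_alg_int x /\ forall f : {rmorphism L -> algC}, `|f x| != 1.

(* absolute norm N_{K/Q}(x) = prod_{sigma in Gal(K/Q)} sigma(x), an element of
   the prime subfield 1%VS = Q; normQ x is the rational r with N(x) = r%:A *)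
Definition normQ (L : splittingFieldType rat) (x : L) : rat :=
  coord [tuple 1] ord0 (galNorm 1%VS fullv x).

Definition Phi_at (L : fieldExtType rat) (n : nat) (x : L) : L :=
  (map_poly (fun z : int => z%:~R : L) 'Phi_n).[x].

(* Main.v *)
Require Import Defs.
From Stdlib Require Import Lra Psatz.
From HB Require Import structures.
From mathcomp Require Import all_boot all_order all_algebra all_field.
From mathcomp Require Import Rstruct.
From Stdlib Require Import Reals.
Import Order.TTheory GRing.Theory Num.Theory.
Local Open Scope ring_scope.
Set Implicit Arguments. Unset Strict Implicit. Unset Printing Implicit Defensive.

Lemma cQK (L : fieldExtType rat) (c : L) : c \in 1%VS ->
  (coord [tuple (1:L)] ord0 c)%:A = c.
Proof.
move=> Hc.
have Hs : c \in span [tuple (1:L)] by rewrite span_seq1.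
by rewrite {2}(coord_span Hs) big_ord1.
Qed.

Lemma cQA (L : fieldExtType rat) (a : rat) : coord [tuple (1:L)] ord0 (a%:A) = a.
Proof.
rewrite linearZ /= (coord_free (X := [tuple (1:L)]) ord0 ord0) ?mulr1 //.
by rewrite seq1_free oner_neq0.
Qed.

Lemma cQpoly (L : fieldExtType rat) (p : {poly L}) : p \is a polyOver 1%VS ->
  map_poly (in_alg L) (map_poly (coord [tuple (1:L)] ord0) p) = p.
Proof.
move=> Hp; apply/polyP=> i; rewrite coef_map /= coef_map_id0 ?linear0 //.
exact/cQK/(polyOverP Hp).
Qed.

Lemma cQpolyA (L : fieldExtType rat) (q : {poly rat}) :
  map_poly (coord [tuple (1:L)] ord0) (map_poly (in_alg L) q) = q.
Proof.
by apply/polyP=> i; rewrite coef_map_id0 ?linear0 // coef_map /= cQA.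
Qed.

Lemma emb_exists (L : fieldExtType rat) (z : L) (Hz : <<1; z>>%VS = fullv) :
  exists f : {rmorphism L -> algC}, True.
Proof.
pose cQ := coord [tuple (1:L)] ord0.
pose Q x := map_poly cQ (Fadjoin_poly 1 z x).
pose Pq := map_poly cQ (minPoly 1 z).
have QE x : map_poly (in_alg L) (Q x) = Fadjoin_poly 1 z x.
  exact/cQpoly/Fadjoin_polyOver.
have PE : map_poly (in_alg L) Pq = minPoly 1 z by exact/cQpoly/minPolyOver.
have szP : size Pq != 1%N.
  by rewrite -(size_map_poly (in_alg L)) PE size_minPoly.
have [w Hw] := closed_rootP (map_poly (ratr : rat -> algC) Pq) 
   ltac:(by rewrite size_map_poly).
pose phi x := (map_poly (ratr : rat -> algC) (Q x)).[w].
have Qmul x y : Q (x * y) = (Q x * Q y) %% Pq.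
  apply: (map_poly_inj (in_alg L)).
  rewrite map_modp rmorphM /= !QE PE -Fadjoin_poly_mod; last first.
    by apply: rpredM; apply: Fadjoin_polyOver.
  by rewrite hornerM !Fadjoin_poly_eq // Hz memvf.
have phi_add : zmod_morphism phi.
  move=> x y; rewrite /phi /Q !raddfB /= hornerD hornerN.
  done.
have phi_mul : monoid_morphism phi.
  split.
    rewrite /phi /Q Fadjoin_polyC ?mem1v // map_polyC /= map_polyC hornerC.
    have h1 : coord [tuple (1:L)] ord0 1 = 1 by have := cQA L 1; rewrite scale1r.
    by rewrite h1; exact: rmorph1.
  move=> x y; rewrite /phi -hornerM -rmorphM Qmul.
  rewrite {2}(divp_eq (Q x * Q y) Pq) rmorphD rmorphM /= hornerD hornerM.
  by rewrite (rootP Hw) mulr0 add0r.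
pose phiaM := GRing.isZmodMorphism.Build _ _ phi phi_add.
pose phimM := GRing.isMonoidMorphism.Build _ _ phi phi_mul.
pose phiRM : {rmorphism L -> algC} := HB.pack phi phiaM phimM.
by exists phiRM.
Qed.

Lemma prodr_ge1' (I : finType) (P : pred I) (R : numDomainType) (F : I -> R) :
  (forall i, P i -> 1 <= F i) -> 1 <= \prod_(i | P i) F i.
Proof.
move=> H; apply: (big_ind (fun x => 1 <= x)) => //.
by move=> x y hx hy; apply: mulr_ege1.
Qed.

Lemma bernoulli (R : numDomainType) (e : R) (j : nat) : 0 <= e ->
  1 + j%:R * e <= (1 + e) ^+ j.
Proof.
move=> he; elim: j => [|j IH]; first by rewrite mul0r addr0 expr0.
rewrite exprSr.
have h1 : 0 <= 1 + e by rewrite addr_ge0.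
apply: le_trans (ler_wpM2r h1 IH).
have h2 : 1 <= 1 + j%:R * e by rewrite lerDl mulr_ge0 // ler0n.
rewrite -natr1 mulrDl mul1r addrA mulrDr mulr1 lerD2l.
exact: ler_peMl.
Qed.

Lemma step_ineq (R : numDomainType) (a : R) (j : nat) : 0 <= a -> a != 1 ->
  `|a - 1| * (if 1 < a then a else 1) ^+ j <= `|a ^+ j.+1 - 1|.
Proof.
move=> ha a1.
have ar : a \is Num.real by apply: ger0_real.
case: ifP => Ha.
  have ha1 : 1 <= a by apply: ltW.
  rewrite !ger0_norm ?subr_ge0 ?exprn_ege1 //.
  rewrite mulrBl mul1r -exprS lerD2l lerN2.
  by apply: exprn_ege1.
have Ha' : a < 1.
  rewrite lt_neqAle a1 /=.
  by move: Ha; rewrite real_ltNge ?real1 // => /negbFE.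
have ha1 : a <= 1 by apply: ltW.
have haj : a ^+ j <= 1 by apply: exprn_ile1.
have haj1 : a ^+ j.+1 <= 1 by apply: exprn_ile1.
rewrite expr1n mulr1 distrC [`|_ ^+ _ - 1|]distrC !ger0_norm ?subr_ge0 //.
rewrite lerD2l lerN2 exprS -[X in _ <= X]mulr1.
by apply: ler_wpM2l.
Qed.
Lemma cyclo_bound (n : nat) (hn : (0 < n)%nat) (v : algC) :
  `| `|v| - 1 | ^+ totient n <= `|(map_poly (intr : int -> algC) 'Phi_n).[v]|.
Proof.
have [z pz] := C_prim_root_exists hn.
rewrite (Cintr_Cyclotomic pz) /cyclotomic horner_prod normr_prod.
have -> : totient n = #|[pred k : 'I_n | coprime k n]|.
  rewrite totient_count_coprime big_mkord -sum1_card big_mkcond /=.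
  rewrite [RHS]big_mkcond /=; apply: eq_bigr => i _; rewrite inE coprime_sym; by case: coprime.
rewrite -prodr_const.
apply: ler_prod => k _; rewrite normr_ge0 /= hornerXsubC.
have z1 : `|z ^+ k| = 1.
  rewrite normrX.
  have : `|z| ^+ n == 1 by rewrite -normrX prim_expr_order // normr1.
  by rewrite pexpr_eq1 // => /eqP ->; rewrite expr1n.
by have := ler_dist_dist v (z ^+ k); rewrite z1.
Qed.

Lemma normQ_emb (L : splittingFieldType rat) (HGal : galois 1 (fullv : {vspace L}))
  (f : {rmorphism L -> algC}) (x : L) :
  ratr (normQ x) = \prod_(s in 'Gal(fullv / 1)%g) f (s x).
Proof.
have Hin : galNorm 1 fullv x \in 1%VS.
  have Hfix := galois_fixedField HGal.
  have := galNorm_fixedField 1%AS (memvf x).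
  by rewrite Hfix.
rewrite /normQ -(fmorph_rat f) -alg_num_field cQK // /galNorm rmorph_prod.
done.
Qed.

Lemma alg_int_emb (L : fieldExtType rat) (g : {rmorphism L -> algC}) (x : L) :
  is_alg_int x -> g x \in Aint.
Proof.
case=> p [mp rp].
apply: (@root_monic_Aint (map_poly (intr : int -> algC) p)).
- have := rmorph_root g rp; rewrite -map_poly_comp.
  by rewrite (eq_map_poly (rmorph_int g)).
- exact: monic_map.
- by apply/polyOverP => i; rewrite coef_map /= intr_int.
Qed.

Lemma key (L : splittingFieldType rat) (HGal : galois 1 (fullv : {vspace L}))
  (u : L) (Hu : is_unit_OK u) (HS : in_S u) :
  exists k : nat, (1 <= k)%nat /\ forall n : nat, (0 < n)%nat ->
    2%:R ^+ totient n <= `|normQ (Phi_at n (u ^+ k))|.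
Proof.
have /and3P[sub sep _] := HGal.
have Hz := esym (eq_adjoin_separable_generator sep sub).
have [f _] := @emb_exists L _ Hz.
pose G : {set gal_of (fullv : {vspace L})} := 'Gal(fullv / 1)%g.
pose a (s : gal_of fullv) := `|f (s u)|.
have a_ge0 s : 0 <= a s by apply: normr_ge0.
have a_ne1 s : a s != 1 by have := HS.2 (f \o s).
have Hprod : 1 <= \prod_(s in G) a s.
  rewrite /a -normr_prod -(normQ_emb HGal f); apply: norm_intr_ge1.
    apply: Cint_rat_Aint; first exact: Crat_rat.
    rewrite (normQ_emb HGal f); apply: rpred_prod => s _.
    exact: (alg_int_emb (f \o s) HS.1).
  rewrite (normQ_emb HGal f); apply/prodf_neq0 => s _.
  by rewrite !fmorph_eq0; case: Hu.
have lt1 s : ~~ (1 < a s) -> a s < 1.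
  move=> Hs; rewrite lt_neqAle a_ne1 /=.
  by move: Hs; rewrite real_ltNge ?real1 ?ger0_real // => /negbNE.
have [s0 Gs0 Ha0] : exists2 s, s \in G & 1 < a s.
  case: (boolP [exists s in G, 1 < a s]) => [/exists_inP[s ? ?]|]; first by exists s.
  rewrite negb_exists_in => /forall_inP Hn; exfalso.
  move: Hprod; rewrite (bigD1 (1%g : gal_of (fullv : {vspace L}))) ?fingroup.group1 //=.
  have H1 : \prod_(s in G | s != 1%g) a s <= 1.
    by apply: prodr_ile1 => s /andP[Gs _]; rewrite a_ge0 ltW // lt1 // Hn.
  move=> Hc.
  have : a 1%g * \prod_(s in G | s != 1%g) a s <= a 1%g * 1 by apply: ler_wpM2l.
  rewrite mulr1 => Hc2.
  have := lt1 _ (Hn _ (fingroup.group1 _)).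
  by move=> Hlt; have := lt_le_trans Hlt (le_trans Hc Hc2); rewrite ltxx.
pose h s := if 1 < a s then a s else 1.
pose g s := `|a s - 1|.
pose t := \prod_(s in G) g s.
pose H := \prod_(s in G) h s.
have t_gt0 : 0 < t.
  by apply: prodr_gt0 => s _; rewrite normr_gt0 subr_eq0 a_ne1.
have h_ge1 s : 1 <= h s by rewrite /h; case: ifP => // /ltW.
have H_gt1 : 1 < H.
  rewrite /H (bigD1 s0) //= {1}/h Ha0.
  apply: lt_le_trans Ha0 _; apply: ler_peMr; first exact: a_ge0.
  exact: prodr_ge1'.
pose y := 2%:R / (t * (H - 1)).
have tH_gt0 : 0 < t * (H - 1) by rewrite mulr_gt0 // subr_gt0.
have y_ge0 : 0 <= y by rewrite divr_ge0 // ltW.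
pose j := Num.Def.archi_bound y.
have Hj : y < j%:R by exact: archi_boundP.
have Hbig : 2%:R <= t * H ^+ j.
  have hH : 0 < H - 1 by rewrite subr_gt0.
  have hb := bernoulli j (ltW hH).
  rewrite [1 + (H - 1)]addrC subrK in hb.
  have h2 : 2%:R < j%:R * (t * (H - 1)) by rewrite -ltr_pdivrMr.
  apply: (le_trans (ltW h2)); rewrite mulrCA; apply: ler_wpM2l; first exact: ltW.
  by apply: le_trans hb; rewrite lerDr.
exists j.+1; split => // n hn.
rewrite -(@ler_rat algC) ratr_norm rmorphXn /= ratr_nat (normQ_emb HGal f).
rewrite normr_prod.
apply: le_trans (_ : (t * H ^+ j) ^+ totient n <= _).
  by apply: lerXn2r; rewrite ?nnegrE // ?ler0n // (le_trans _ Hbig) ?ler0n.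
rewrite /t /H -prodrXl -big_split /= -prodrXl.
apply: ler_prod => s Gs; apply/andP; split.
  apply: exprn_ge0; apply: mulr_ge0; first exact: normr_ge0.
  by apply: exprn_ge0; rewrite /h; case: ifP => _; [exact: a_ge0|exact: ler01].
have -> : f (s (Phi_at n (u ^+ j.+1))) =
    (map_poly (intr : int -> algC) 'Phi_n).[((f \o s) u) ^+ j.+1].
  rewrite /Phi_at.
  transitivity ((f \o s) ((map_poly (intr : int -> L) 'Phi_n).[u ^+ j.+1])); first by [].
  rewrite -horner_map -map_poly_comp rmorphXn.
  rewrite (_ : map_poly _ _ = map_poly intr 'Phi_n) //; apply: eq_map_poly => z /=; by rewrite !rmorph_int.
apply: le_trans (cyclo_bound hn _).
rewrite normrX; apply: lerXn2r; rewrite ?nnegrE //.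
  apply: mulr_ge0; first exact: normr_ge0.
  by apply: exprn_ge0; rewrite /h; case: ifP => _; [exact: a_ge0|exact: ler01].
exact: (step_ineq j (a_ge0 s) (a_ne1 s)).
Qed.

Lemma R_step (r : rat) (m : nat) : 2%:R ^+ m <= `|r| ->
  Rle (pow (IZR 2) m) (Rabs (ratr r)).
Proof.
move=> H; apply/RleP.
have -> : Rabs (ratr r) = `|ratr r| by [].
have -> : IZR 2 = 2%:R by rewrite -INRE INR_IZR_INZ.
by rewrite RpowE -ratr_norm -ratr_nat -rmorphXn ler_rat.
Qed.

Local Close Scope ring_scope.

Lemma exp_step (n phi : nat) : (n <= 2 * phi)%N ->
  Rle (exp (Rmult (Rdiv (ln 2) 2) (INR n))) (pow 2 phi).
Proof.
move=> /ssrnat.leP hle.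
have l2 : Rlt 0 (ln 2) by rewrite <- ln_1; apply: ln_increasing; lra.
have hn : Rle (INR n) (Rmult 2 (INR phi)).
  by have := le_INR _ _ hle; rewrite mult_INR.
rewrite -Rpower_pow; last by lra.
rewrite /Rpower.
have hle2 : Rle (Rmult (Rdiv (ln 2) 2) (INR n)) (Rmult (INR phi) (ln 2)) by nra.
case: (Rle_lt_or_eq_dec _ _ hle2) => [hlt|->]; last exact: Rle_refl.
exact: Rlt_le (exp_increasing _ _ hlt).
Qed.

Theorem lemma2p1 (L : splittingFieldType rat) (m : nat)
  (HGal : galois 1%VS (fullv : {vspace L})) (Hm : \dim (fullv : {vspace L}) = m)
  (u : L) (Hu : is_unit_OK u) (HS : in_S u) :
  exists k : nat, (1 <= k)%N /\
    exists c : R, Rlt 0%R c /\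
      forall n : nat, (0 < n)%N -> (n <= 2 * totient n)%N ->
        Rle (exp (Rmult c (INR n))) (Rabs (ratr (normQ (Phi_at n (GRing.exp u k))))).
Proof.
have [k [hk Hk]] := key HGal Hu HS.
exists k; split => //.
exists (Rdiv (ln 2) 2); split.
  have l2 : Rlt 0 (ln 2) by rewrite <- ln_1; apply: ln_increasing; lra.
  lra.
move=> n hn hle.
apply: Rle_trans (exp_step hle) _.
exact: R_step (Hk n hn).
Qed.
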